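(* Let $n\geq 2$, $\lambda=\frac{n-1}{2}$, and let $$\mathcal K(t)=\sum_{l=1}^\infty\frac{-1}{l(n+l-1)}\cdot\frac{\lambda+l}{\lambda}\,C_l^\lambda(t).$$ For $r\in[0,1)$ and $\vartheta\in[0,\pi]$ let $$p_r(\cos\vartheta)=\frac{1}{\Sigma_n}\cdot\frac{1-r^2}{(1-2r\cos\vartheta+r^2)^{(n+1)/2}}=\frac{1}{\Sigma_n}\sum_{l=0}^\infty r^l\,\frac{\lambda+l}{\lambda}\,C_l^\lambda(\cos\vartheta),$$ where $\Sigma_n=\frac{2\pi^{(n+1)/2}}{\Gamma((n+1)/2)}$. Then, for $\vartheta\in(0,\pi]$, $$\mathcal K(\cos\vartheta)=-\lim_{\epsilon\to0}\int_0^{1-\epsilon}R^{n-2}\int_0^R\frac{\Sigma_n\, p_r(\cos\vartheta)-1}{r}\,dr\,dR.$$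
   Context: $C_l^\lambda$ denotes the Gegenbauer polynomial of degree $l$ and order $\lambda$. $\Sigma_n$ is the surface area of the unit sphere $\mathcal S^n\subseteq\mathbb R^{n+1}$, and $p_r$ is the Poisson kernel on $\mathcal S^n$. *)

(* Defs.v *)
From Stdlib Require Import Reals Lra ClassicalEpsilon.
From Coquelicot Require Import Coquelicot.
Open Scope R_scope.

(* Gegenbauer polynomial C_l^lam(t), via the standard three-term recurrence
   C_0 = 1, C_1 = 2 lam t,
   l C_l = 2 t (l + lam - 1) C_{l-1} - (l + 2 lam - 2) C_{l-2}. *)
Fixpoint gegen_pair (lam t : R) (l : nat) : R * R :=
  match l with
  | O => (1, 2 * lam * t)
  | S k =>
      let (a, b) := gegen_pair lam t k in
      (b, (2 * t * (INR k + 2 + lam - 1) * b - (INR k + 2 + 2 * lam - 2) * a)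
            / (INR k + 2))
  end.
Definition gegenbauer (l : nat) (lam t : R) : R := fst (gegen_pair lam t l).

Definition Gamma (x : R) : R :=
  RInt_gen (fun s => Rpower s (x - 1) * exp (- s))
           (at_right 0) (Rbar_locally p_infty).

(* Surface area of the unit sphere S^n in R^(n+1). *)
Definition Sigma (n : nat) : R :=
  2 * Rpower PI ((INR n + 1) / 2) / Gamma ((INR n + 1) / 2).

Definition poisson (n : nat) (r t : R) : R :=
  / Sigma n * ((1 - r ^ 2) / Rpower (1 - 2 * r * t + r ^ 2) ((INR n + 1) / 2)).

Definition lam_of (n : nat) : R := (INR n - 1) / 2.

Definition K_term (n l : nat) (t : R) : R :=
  let lam := lam_of n in
  (-1) / (INR l * (INR n + INR l - 1)) * ((lam + INR l) / lam) * gegenbauer l lam t.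

(* K(t) = sum_{l>=1} K_term n l t, the sum being taken in the Abel sense:
   lim_{rho -> 1^-} sum_{l>=1} rho^l K_term n l t (which agrees with the
   ordinary sum whenever the latter converges, by Abel's theorem). *)
Definition Kfun (n : nat) (t : R) : R :=
  epsilon (inhabits 0)
    (fun L => filterlim (fun rho => Series (fun k => rho ^ (S k) * K_term n (S k) t))
                        (at_left 1) (locally L)).

(* Main.v *)
Require Import Defs.
From Stdlib Require Import Reals Lra Lia Psatz ClassicalEpsilon.
From Coquelicot Require Import Coquelicot.
Open Scope R_scope.

Lemma gegen_pair_S lam t k :
  gegen_pair lam t (S k) =
  (snd (gegen_pair lam t k),
   (2 * t * (INR k + 2 + lam - 1) * snd (gegen_pair lam t k)
    - (INR k + 2 + 2 * lam - 2) * fst (gegen_pair lam t k)) / (INR k + 2)).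
Proof. simpl. destruct (gegen_pair lam t k). reflexivity. Qed.

Lemma gegen_0 lam t : gegenbauer 0 lam t = 1.
Proof. reflexivity. Qed.
Lemma gegen_1 lam t : gegenbauer 1 lam t = 2 * lam * t.
Proof. unfold gegenbauer. rewrite gegen_pair_S. reflexivity. Qed.
Lemma gegen_rec lam t k :
  gegenbauer (S (S k)) lam t =
  (2 * t * (INR k + 2 + lam - 1) * gegenbauer (S k) lam t
   - (INR k + 2 + 2 * lam - 2) * gegenbauer k lam t) / (INR k + 2).
Proof.
  unfold gegenbauer. simpl. destruct (gegen_pair lam t k) as [a b]. simpl. reflexivity.
Qed.

Lemma nat_unbounded (r : R) : exists N : nat, r < INR N.
Proof.
  destruct (Rle_dec 0 r) as [H|H].
  - destruct (nfloor_ex r H) as [m Hm]. exists (S m). rewrite S_INR. lra.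
  - exists O. simpl. lra.
Qed.

Lemma eventually_noninc_bounded (v : nat -> R) (N : nat) :
  (forall k, (N <= k)%nat -> v (S k) <= v k) -> exists M, forall k, v k <= M.
Proof.
  intros H.
  exists (sum_f_R0 (fun j => Rabs (v j)) N).
  assert (Hle : forall k, (k <= N)%nat -> v k <= sum_f_R0 (fun j => Rabs (v j)) N).
  { intros k Hk. clear H. induction N as [|N IH].
    - assert (k = O) by lia. subst. simpl. apply Rle_abs.
    - destruct (Nat.eq_dec k (S N)) as [->|Hne].
      + simpl. pose proof (Rle_abs (v (S N))).
        assert (0 <= sum_f_R0 (fun j => Rabs (v j)) N).
        { apply cond_pos_sum. intros; apply Rabs_pos. }
        lra.
      + simpl. pose proof (Rabs_pos (v (S N))).
        assert (v k <= sum_f_R0 (fun j => Rabs (v j)) N).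
        { apply IH. lia. }
        lra. }
  intros k. destruct (Compare_dec.le_lt_dec k N) as [Hk|Hk]. apply Hle; auto.
  induction k as [|k IH]. lia.
  destruct (Nat.eq_dec k N) as [->|Hne].
  - eapply Rle_trans. apply H. lia. apply Hle. lia.
  - eapply Rle_trans. apply H. lia. apply IH. lia.
Qed.

Lemma radius_ge1 (c : nat -> R) :
  (forall r, 0 < r < 1 -> exists M, forall l, Rabs (c l * r ^ l) <= M) ->
  Rbar_le 1 (CV_radius c).
Proof.
  intros H. destruct (CV_radius_bounded c) as [Hub Hlub].
  destruct (CV_radius c) as [R| |] eqn:E; simpl; auto.
  - destruct (Rle_dec 1 R) as [h|h]; auto. exfalso.
    pose proof (CV_radius_ge_0 c) as H0. rewrite E in H0. simpl in H0.
    set (r := (R + 1) / 2).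
    assert (Hr : 0 < r < 1) by (unfold r; lra).
    specialize (Hub r (H r Hr)). simpl in Hub. unfold r in Hub. lra.
  - pose proof (CV_radius_ge_0 c) as H0. rewrite E in H0. simpl in H0. auto.
Qed.

Section Rad.
Variables (lam t : R).
Hypothesis hlam : 0 < lam.
Let c k := gegenbauer k lam t.

Definition Qf k := c (S k) ^ 2 - 2 * t * c k * c (S k) + c k ^ 2.

Lemma Q_step k :
  Qf (S k) = Qf k + (t * c (S k) - c k) ^ 2 *
     ((2 * lam - 2) * (2 * (INR k + 2) + (2 * lam - 2)) / (INR k + 2) ^ 2).
Proof.
  unfold Qf, c. rewrite gegen_rec.
  assert (0 <= INR k) by apply pos_INR.
  field. lra.
Qed.

Lemma Q_ge (k : nat) : -1 < t < 1 -> (t * c (S k) - c k) ^ 2 <= Qf k /\ c (S k) ^ 2 * (1 - t^2) <= Qf k.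
Proof.
  intros Ht. unfold Qf. set (x := c k). set (y := c (S k)).
  assert (H0 : 0 <= (1 - t^2) * y^2) by (apply Rmult_le_pos; [nra | apply pow2_ge_0]).
  assert (H1 : 0 <= (x - t * y)^2) by apply pow2_ge_0.
  split; [ring_simplify; ring_simplify in H0; lra | ring_simplify; ring_simplify in H1; ring_simplify in H0; lra].
Qed.

Lemma Q_bound k : -1 < t < 1 ->
  Qf (S k) <= Qf k * (1 + (2 * Rabs (2*lam-2) + (2*lam-2)^2) / (INR k + 2)).
Proof.
  intros Ht. rewrite Q_step. destruct (Q_ge k Ht) as [H1 _].
  set (u := (t * c (S k) - c k) ^ 2) in *.
  set (K := 2*lam-2). set (m := INR k + 2).
  assert (Hm : 1 <= m) by (unfold m; pose proof (pos_INR k); lra).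
  assert (Hu : 0 <= u) by (unfold u; apply pow2_ge_0).
  assert (HW : K * (2 * m + K) / m ^ 2 <= (2 * Rabs K + K ^ 2) / m).
  { apply Rle_trans with ((2 * Rabs K * m + K^2) / m^2).
    - unfold Rdiv. apply Rmult_le_compat_r. apply Rlt_le, Rinv_0_lt_compat. nra.
      pose proof (Rle_abs K). nra.
    - replace ((2 * Rabs K + K ^ 2) / m) with ((2 * Rabs K * m + K^2 * m) / m^2) by (field; lra).
      unfold Rdiv. apply Rmult_le_compat_r. apply Rlt_le, Rinv_0_lt_compat. nra.
      assert (0 <= K^2) by apply pow2_ge_0. nra. }
  assert (HW0 : 0 <= (2 * Rabs K + K ^ 2) / m).
  { apply Rdiv_le_0_compat. pose proof (Rabs_pos K). pose proof (pow2_ge_0 K). lra. lra. }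
  assert (u * (K * (2 * m + K) / m ^ 2) <= Qf k * ((2 * Rabs K + K ^ 2) / m)).
  { apply Rle_trans with (u * ((2 * Rabs K + K ^ 2) / m)).
    apply Rmult_le_compat_l; auto. apply Rmult_le_compat_r; auto. }
  lra.
Qed.

Lemma bound_inner (r : R) : 0 < r < 1 -> -1 < t < 1 ->
  exists M, forall l, Rabs (c l * r ^ l) <= M.
Proof.
  intros Hr Ht.
  set (W := 2 * Rabs (2*lam-2) + (2*lam-2)^2).
  assert (HW : 0 <= W) by (unfold W; pose proof (Rabs_pos (2*lam-2)); pose proof (pow2_ge_0 (2*lam-2)); lra).
  destruct (nat_unbounded (W / (1 - r^2))) as [N HN].
  destruct (eventually_noninc_bounded (fun k => Qf k * r ^ (2 * k)) N) as [M HM].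
  { intros k Hk.
    assert (HQ0 : 0 <= Qf k) by (destruct (Q_ge k Ht) as [H1 _]; pose proof (pow2_ge_0 (t * c (S k) - c k)); lra).
    pose proof (Q_bound k Ht) as HB. fold W in HB.
    assert (HNk : INR N <= INR k) by (apply le_INR; auto).
    assert (Hr2 : 0 < r^2 < 1) by (split; nra).
    assert (Hm : W / (1 - r^2) < INR k + 2) by lra.
    assert (Hm' : W < (1 - r^2) * (INR k + 2)).
    { apply (Rmult_lt_compat_r (1 - r^2)) in Hm. 2: lra.
      unfold Rdiv in Hm. rewrite Rmult_assoc, Rinv_l in Hm by lra. lra. }
    assert (Hf : (1 + W / (INR k + 2)) * r^2 <= 1).
    { pose proof (pos_INR k).
      replace ((1 + W / (INR k + 2)) * r^2) with ((INR k + 2 + W) * r^2 / (INR k + 2)) by (field; lra).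
      apply Rle_trans with ((INR k + 2) / (INR k + 2)). 2: right; field; lra.
      unfold Rdiv. apply Rmult_le_compat_r. apply Rlt_le, Rinv_0_lt_compat; lra. nra. }
    replace (2 * S k)%nat with (S (S (2 * k))) by lia.
    change (r ^ S (S (2 * k))) with (r * (r * r ^ (2 * k))).
    assert (0 <= r ^ (2 * k)) by (apply pow_le; lra).
    set (p := r ^ (2 * k)) in *.
    assert (Qf (S k) * (r * r) <= Qf k * (1 + W / (INR k + 2)) * (r * r)) by nra.
    simpl in Hf. rewrite Rmult_1_r in Hf.
    assert (Qf k * (1 + W / (INR k + 2)) * (r * r) <= Qf k) by nra.
    nra. }
  exists (1 + Rabs (c O) + M / (1 - t^2)).
  intros l. destruct l as [|k].
  { rewrite pow_O, Rmult_1_r. assert (0 <= M / (1 - t^2)).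
    { apply Rdiv_le_0_compat. 2: nra. specialize (HM O).
      replace (2*0)%nat with O in HM by lia. rewrite pow_O, Rmult_1_r in HM.
      destruct (Q_ge O Ht) as [H1 _]. pose proof (pow2_ge_0 (t * c 1%nat - c O)). lra. }
    lra. }
  specialize (HM k). destruct (Q_ge k Ht) as [_ H2].
  assert (Hy : (c (S k) * r ^ S k) ^ 2 <= M / (1 - t^2)).
  { apply Rle_trans with (c (S k) ^ 2 * r ^ (2 * k)).
    - rewrite Rpow_mult_distr. apply Rmult_le_compat_l. apply pow2_ge_0.
      rewrite <- pow_mult. replace (S k * 2)%nat with (S (S (2 * k))) by lia.
      change (r ^ S (S (2 * k))) with (r * (r * r ^ (2 * k))).
      assert (0 <= r ^ (2 * k)) by (apply pow_le; lra). set (p := r ^ (2 * k)) in *. clearbody p. clear - Hr H. assert (0 <= r * p) by (apply Rmult_le_pos; lra). nra.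
    - assert (0 <= r ^ (2 * k)) by (apply pow_le; lra).
      apply Rmult_le_reg_r with (1 - t^2). nra.
      replace (M / (1 - t^2) * (1 - t^2)) with M by (field; nra).
      assert (c (S k) ^ 2 * (1 - t ^ 2) * r ^ (2 * k) <= Qf k * r ^ (2 * k)) by (apply Rmult_le_compat_r; auto).
      lra. }
  pose proof (Rabs_pos (c O)).
  assert (Rabs (c (S k) * r ^ S k) <= 1 + (c (S k) * r ^ S k) ^ 2).
  { rewrite <- pow2_abs. pose proof (Rabs_pos (c (S k) * r ^ S k)). nra. }
  lra.
Qed.
End Rad.

Fixpoint bseq (lam : R) (k : nat) : R :=
  match k with O => 1 | S k => bseq lam k * (INR k + 2 * lam) / (INR k + 1) end.

Lemma gegen_m1 lam k : 0 < lam ->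
  gegenbauer k lam (-1) = (-1) ^ k * bseq lam k /\
  gegenbauer (S k) lam (-1) = (-1) ^ (S k) * bseq lam (S k).
Proof.
  intros hl. induction k as [|k [IH1 IH2]].
  - rewrite gegen_0, gegen_1. simpl. split; field.
  - split; auto. rewrite gegen_rec, IH1, IH2.
    change (bseq lam (S (S k))) with (bseq lam (S k) * (INR (S k) + 2 * lam) / (INR (S k) + 1)).
    change (bseq lam (S k)) with (bseq lam k * (INR k + 2 * lam) / (INR k + 1)).
    rewrite S_INR. simpl pow. pose proof (pos_INR k). field. lra.
Qed.

Lemma bseq_pos lam k : 0 < lam -> 0 <= bseq lam k.
Proof.
  intros hl. induction k; simpl. lra.
  pose proof (pos_INR k). apply Rdiv_le_0_compat. apply Rmult_le_pos; lra. lra.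
Qed.

Lemma bound_m1 lam (r : R) : 0 < lam -> 0 < r < 1 ->
  exists M, forall l, Rabs (gegenbauer l lam (-1) * r ^ l) <= M.
Proof.
  intros hl Hr.
  destruct (nat_unbounded (2 * lam / (1 - r))) as [N HN].
  destruct (eventually_noninc_bounded (fun k => bseq lam k * r ^ k) N) as [M HM].
  { intros k Hk. simpl.
    assert (HNk : INR N <= INR k) by (apply le_INR; auto).
    pose proof (bseq_pos lam k hl).
    assert (0 <= r ^ k) by (apply pow_le; lra).
    assert (Hm : 2 * lam < (1 - r) * INR k).
    { assert (2 * lam / (1 - r) < INR k) by lra.
      apply (Rmult_lt_compat_r (1 - r)) in H1. 2: lra.
      unfold Rdiv in H1. rewrite Rmult_assoc, Rinv_l in H1 by lra. lra. }
    assert (Hf : r * (INR k + 2 * lam) / (INR k + 1) <= 1).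
    { pose proof (pos_INR k). apply Rmult_le_reg_r with (INR k + 1). lra.
      unfold Rdiv. rewrite Rmult_assoc, Rinv_l by lra. nra. }
    replace (bseq lam k * (INR k + 2 * lam) / (INR k + 1) * (r * r ^ k))
      with ((bseq lam k * r ^ k) * (r * (INR k + 2 * lam) / (INR k + 1))) by (field; pose proof (pos_INR k); lra).
    assert (0 <= bseq lam k * r ^ k) by (apply Rmult_le_pos; auto).
    assert (0 <= r * (INR k + 2 * lam) / (INR k + 1)).
    { pose proof (pos_INR k). apply Rdiv_le_0_compat. apply Rmult_le_pos; lra. lra. }
    set (A := bseq lam k * r ^ k) in *. clearbody A. nra. }
  exists M. intros l. destruct (gegen_m1 lam l hl) as [H _]. rewrite H.
  rewrite Rabs_mult, Rabs_mult, pow_1_abs, Rmult_1_l.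
  rewrite (Rabs_right (bseq lam l)) by (apply Rle_ge, bseq_pos; auto).
  rewrite (Rabs_right (r ^ l)) by (apply Rle_ge, pow_le; lra). apply HM.
Qed.

Lemma radius_c lam t : 0 < lam -> -1 <= t < 1 ->
  Rbar_le 1 (CV_radius (fun k => gegenbauer k lam t)).
Proof.
  intros hl Ht. apply radius_ge1. intros r Hr.
  destruct (Req_dec t (-1)) as [->|Hne].
  - apply bound_m1; auto.
  - apply bound_inner; auto. lra.
Qed.

Lemma scal_R (a b : R) : scal a b = a * b. Proof. reflexivity. Qed.
Lemma plus_R (a b : R) : plus a b = a + b. Proof. reflexivity. Qed.
Lemma zero_R : (zero : R) = 0. Proof. reflexivity. Qed.
Lemma mult_R (a b : R) : mult a b = a * b. Proof. reflexivity. Qed.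

Section Gen.
Variables (lam t : R).
Hypothesis hlam : 0 < lam.
Hypothesis Ht : -1 <= t < 1.
Definition cc k := gegenbauer k lam t.

Lemma rad_cc r : Rabs r < 1 -> Rbar_lt (Rabs r) (CV_radius cc).
Proof.
  intros H. eapply Rbar_lt_le_trans. 2: apply (radius_c lam t hlam Ht). simpl. auto.
Qed.

Definition Zs := PS_plus (PS_plus (PS_plus (PS_derive cc) (PS_scal (-2*t) (PS_incr_1 (PS_derive cc))))
   (PS_incr_1 (PS_incr_1 (PS_derive cc))))
   (PS_plus (PS_scal (-2*lam*t) cc) (PS_scal (2*lam) (PS_incr_1 cc))).

Lemma Zs_0 k : Zs k = 0.
Proof.
  unfold Zs, PS_plus, PS_scal, PS_incr_1, PS_derive, cc.
  destruct k as [|[|k]]; cbn -[INR gegenbauer Rmult Rplus].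
  - rewrite gegen_0, gegen_1. simpl. ring.
  - rewrite gegen_rec, gegen_0, gegen_1. simpl. field.
  - rewrite (gegen_rec lam t (S k)). rewrite !S_INR. pose proof (pos_INR k). field. lra.
Qed.


Lemma ode r : Rabs r < 1 ->
  (1 - 2*r*t + r^2) * PSeries (PS_derive cc) r = 2*lam*(t - r) * PSeries cc r.
Proof.
  intros Hr. pose proof (rad_cc r Hr) as H.
  assert (E : PSeries Zs r = 0).
  { rewrite (PSeries_ext Zs (fun _ => 0)). apply PSeries_const_0. apply Zs_0. }
  assert (Hd : ex_pseries (PS_derive cc) r) by (apply ex_pseries_derive; exact H).
  assert (Hc : ex_pseries cc r) by (apply CV_radius_inside; exact H).
  assert (Hs : forall k (a : nat -> R), ex_pseries a r -> ex_pseries (PS_scal k a) r).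
  { intros k a Ha. apply ex_pseries_scal. apply Rmult_comm. exact Ha. }
  unfold Zs in E.
  rewrite PSeries_plus in E.
  2:{ apply ex_pseries_plus. apply ex_pseries_plus. exact Hd. apply Hs, ex_pseries_incr_1, Hd.
      apply ex_pseries_incr_1, ex_pseries_incr_1, Hd. }
  2:{ apply ex_pseries_plus. apply Hs, Hc. apply Hs, ex_pseries_incr_1, Hc. }
  rewrite PSeries_plus in E.
  2:{ apply ex_pseries_plus. exact Hd. apply Hs, ex_pseries_incr_1, Hd. }
  2:{ apply ex_pseries_incr_1, ex_pseries_incr_1, Hd. }
  rewrite PSeries_plus in E.
  2:{ exact Hd. }
  2:{ apply Hs, ex_pseries_incr_1, Hd. }
  rewrite (PSeries_plus (PS_scal _ cc)) in E.
  2:{ apply Hs, Hc. }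
  2:{ apply Hs, ex_pseries_incr_1, Hc. }
  rewrite !PSeries_scal, !PSeries_incr_1 in E.
  set (X := PSeries (PS_derive cc) r) in *. set (Y := PSeries cc r) in *.
  clearbody X Y.
  transitivity ((1 - 2*r*t + r^2) * X - (X + -2 * t * (r * X) + r * (r * X) + (-2 * lam * t * Y + 2 * lam * (r * Y)))).
  rewrite E. ring. ring.
Qed.

Lemma q_pos x : -1 < x -> 0 < 1 - 2*x*t + x^2.
Proof.
  intros Hx. destruct (Rle_dec 0 x) as [H|H].
  - destruct (Req_dec x 0) as [->|H0]. lra.
    assert (0 < x * (1 - t)) by (apply Rmult_lt_0_compat; lra).
    assert (0 <= (1 - x)^2) by apply pow2_ge_0. nra.
  - assert (0 <= -x * (1 + t)) by (apply Rmult_le_pos; lra).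
    assert (0 < (1 + x)^2) by (apply pow_lt; lra). nra.
Qed.

Lemma gen_fun r : Rabs r < 1 -> PSeries cc r * exp (lam * ln (1 - 2*r*t + r^2)) = 1.
Proof.
  intros Hr.
  set (h := fun x => PSeries cc x * exp (lam * ln (1 - 2*x*t + x^2))).
  assert (Hd : forall x, Rmin 0 r <= x <= Rmax 0 r -> is_derive h x 0).
  { intros x Hx.
    assert (Hx1 : Rabs x < 1).
    { unfold Rmin, Rmax in Hx. destruct (Rle_dec 0 r); apply Rabs_def1;
      apply Rabs_def2 in Hr; lra. }
    assert (Hq := q_pos x (proj2 (Rabs_def2 _ _ Hx1))).
    pose proof (rad_cc x Hx1) as Hrad.
    unfold h. auto_derive.
    - split. apply ex_derive_PSeries. exact Hrad. split. exact Hq. auto.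
    - rewrite Derive_PSeries by exact Hrad.
      pose proof (ode x Hx1) as Ho.
      set (E := exp (lam * ln (1 - 2*x*t + x^2))) in *.
      set (X := PSeries (PS_derive cc) x) in *. set (Y := PSeries cc x) in *.
      clearbody E X Y.
      assert (HX : X = 2*lam*(t-x)*Y/(1 - 2*x*t + x^2)) by (rewrite <- Ho; field; lra).
      rewrite HX. repeat match goal with |- context [exp ?a] => set (E2 := exp a); clearbody E2 end.
      field. replace (1 + - (2 * x * t) + x * (x * 1)) with (1 - 2*x*t + x^2) by ring. lra. }
  pose proof (is_RInt_derive h (fun _ => 0) 0 r Hd (fun x _ => continuous_const (0:R) x)) as HI.
  pose proof (is_RInt_const 0 r 0) as HI2.
  pose proof (is_RInt_unique _ _ _ _ HI) as U1. pose proof (is_RInt_unique _ _ _ _ HI2) as U2.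
  rewrite U1 in U2. rewrite scal_R in U2. rewrite Rmult_0_r in U2.
  assert (H0 : h 0 = 1).
  { unfold h. rewrite PSeries_0. unfold cc. rewrite gegen_0.
    replace (1 - 2 * 0 * t + 0^2) with 1 by ring. rewrite ln_1, Rmult_0_r, exp_0. ring. }
  unfold minus in U2. rewrite plus_R in U2. rewrite H0 in U2.
  change (opp 1) with (-1) in U2. change (h r = 1). lra.
Qed.

Definition aa k := (lam + INR k) / lam * cc k.
Definition ee := PS_decr_1 aa.

Lemma aa_ext k : aa k = PS_plus cc (PS_scal (/lam) (PS_incr_1 (PS_derive cc))) k.
Proof.
  unfold aa, PS_plus, PS_scal, PS_incr_1, PS_derive.
  destruct k as [|k]; cbn -[INR gegenbauer Rmult Rplus Rinv cc].
  - simpl. field. lra.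
  - field. lra.
Qed.

Lemma rad_aa : Rbar_le 1 (CV_radius aa).
Proof.
  rewrite (CV_radius_ext _ _ aa_ext).
  eapply Rbar_le_trans. 2: apply CV_radius_plus.
  rewrite CV_radius_scal. 2: apply Rinv_neq_0_compat; lra.
  rewrite CV_radius_incr_1, CV_radius_derive.
  pose proof (radius_c lam t hlam Ht) as H. fold cc in H.
  unfold Rbar_min. destruct (CV_radius cc); simpl in *; auto. rewrite Rmin_left; lra.
Qed.

Lemma rad_ee : Rbar_le 1 (CV_radius ee).
Proof. unfold ee. rewrite CV_radius_decr_1. apply rad_aa. Qed.

Lemma P_closed r : Rabs r < 1 ->
  PSeries aa r = (1 - r^2) / exp ((lam + 1) * ln (1 - 2*r*t + r^2)).
Proof.
  intros Hr. pose proof (rad_cc r Hr) as H.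
  rewrite (PSeries_ext _ _ _ aa_ext).
  rewrite PSeries_plus. 2: apply CV_radius_inside; exact H.
  2:{ apply ex_pseries_scal. apply Rmult_comm. apply ex_pseries_incr_1, ex_pseries_derive. exact H. }
  rewrite PSeries_scal, PSeries_incr_1.
  pose proof (ode r Hr) as Ho. pose proof (gen_fun r Hr) as Hg.
  assert (Hq := q_pos r (proj2 (Rabs_def2 _ _ Hr))).
  replace ((lam + 1) * ln (1 - 2*r*t + r^2)) with (lam * ln (1 - 2*r*t + r^2) + ln (1 - 2*r*t + r^2)) by ring.
  rewrite exp_plus, exp_ln by exact Hq.
  set (E := exp (lam * ln (1 - 2*r*t + r^2))) in *.
  assert (HE : 0 < E) by apply exp_pos.
  set (X := PSeries (PS_derive cc) r) in *. set (Y := PSeries cc r) in *.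
  clearbody E X Y.
  assert (HY : Y = / E) by (replace Y with (Y * E / E) by (field; lra); rewrite Hg; field; lra).
  assert (HX : X = 2*lam*(t-r)*Y/(1 - 2*r*t + r^2)) by (rewrite <- Ho; field; lra).
  rewrite HX, HY. field. lra.
Qed.

Lemma e_closed r : 0 < r < 1 ->
  PSeries ee r = ((1 - r^2) / exp ((lam + 1) * ln (1 - 2*r*t + r^2)) - 1) / r.
Proof.
  intros Hr. assert (Hr' : Rabs r < 1) by (rewrite Rabs_right; lra).
  rewrite <- P_closed by exact Hr'.
  rewrite (PSeries_decr_1 aa r).
  2:{ apply CV_radius_inside. eapply Rbar_lt_le_trans. 2: apply rad_aa. exact Hr'. }
  unfold ee. replace (aa 0) with 1. field. lra.
  unfold aa, cc. rewrite gegen_0. simpl. field. lra.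
Qed.
End Gen.

Lemma exp_le_mono x y : x <= y -> exp x <= exp y.
Proof. intros [H|H]. left; apply exp_increasing; auto. right; rewrite H; auto. Qed.

Lemma locally_gt s a : a < s -> locally s (fun y => a < y).
Proof.
  intros H. assert (Hp : 0 < s - a) by lra.
  exists (mkposreal _ Hp). intros y Hy. change (Rabs (y - s) < s - a) in Hy.
  apply Rabs_def2 in Hy. lra.
Qed.

Lemma locally_lt s a : s < a -> locally s (fun y => y < a).
Proof.
  intros H. assert (Hp : 0 < a - s) by lra.
  exists (mkposreal _ Hp). intros y Hy. change (Rabs (y - s) < a - s) in Hy.
  apply Rabs_def2 in Hy. lra.
Qed.

Lemma ln_le_sub1 y : 0 < y -> ln y <= y - 1.
Proof. intros H. pose proof (exp_ineq1_le (ln y)). rewrite exp_ln in H0 by auto. lra. Qed.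

Section Gam.
Variable k : R.
Hypothesis hk : 0 < k.
Let f := fun s => Rpower s k * exp (- s).

Lemma f_cont s : 0 < s -> continuous f s.
Proof.
  intros Hs. apply (ex_derive_continuous (K := R_AbsRing) (V := R_NormedModule)). unfold f, Rpower. auto_derive. auto.
Qed.

Lemma f_pos s : 0 < f s.
Proof. unfold f, Rpower. apply Rmult_lt_0_compat; apply exp_pos. Qed.

Lemma f_ex a b : 0 < a -> 0 < b -> ex_RInt f a b.
Proof.
  intros Ha Hb. apply (ex_RInt_continuous (V := R_CompleteNormedModule)). intros z Hz. apply f_cont.
  unfold Rmin, Rmax in Hz. destruct (Rle_dec a b); lra.
Qed.

Lemma f_le1 s : 0 < s <= 1 -> f s <= 1.
Proof.
  intros Hs. unfold f, Rpower.
  assert (ln s <= 0) by (rewrite <- ln_1; apply ln_le; lra).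
  assert (exp (k * ln s) <= 1) by (rewrite <- exp_0; apply exp_le_mono; nra).
  assert (exp (- s) <= 1) by (rewrite <- exp_0; apply exp_le_mono; lra).
  pose proof (exp_pos (k * ln s)). pose proof (exp_pos (-s)). nra.
Qed.

Let K := exp (k * (ln (2 * k) - 1)).

Lemma f_le_g s : 0 < s -> f s <= K * exp (- s / 2).
Proof.
  intros Hs. unfold f, K, Rpower. rewrite <- !exp_plus. apply exp_le_mono.
  pose proof (ln_le_sub1 (s / (2 * k))). rewrite ln_div in H by lra.
  assert (k * (ln s - ln (2 * k)) <= k * (s / (2 * k) - 1)).
  { apply Rmult_le_compat_l. lra. apply H. apply Rdiv_lt_0_compat; lra. }
  replace (k * (s / (2 * k) - 1)) with (s / 2 - k) in H0 by (field; lra).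
  lra.
Qed.

Definition FF s := RInt f 1 s.

Lemma FF_diff u v : 0 < u -> 0 < v -> FF v - FF u = RInt f u v.
Proof.
  intros Hu Hv. unfold FF. rewrite <- (RInt_Chasles f 1 u v). 2,3: apply f_ex; lra.
  change (plus ?a ?b) with (a + b). ring.
Qed.

Lemma int_abs_le01 u v : 0 < u <= 1 -> 0 < v <= 1 -> Rabs (RInt f u v) <= Rabs (v - u).
Proof.
  intros Hu Hv.
  assert (Hgen : forall a b, 0 < a <= 1 -> 0 < b <= 1 -> a <= b -> Rabs (RInt f a b) <= b - a).
  { intros a b Ha Hb Hab. eapply Rle_trans. apply abs_RInt_le_const with (M := 1); auto.
    apply f_ex; lra. intros x Hx. rewrite Rabs_right. apply f_le1; lra. apply Rle_ge, Rlt_le, f_pos.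
    lra. }
  destruct (Rle_dec u v).
  - rewrite (Rabs_right (v - u)) by lra. apply Hgen; auto.
  - apply Rnot_le_lt in n. rewrite <- opp_RInt_swap by (apply f_ex; lra). change (opp ?x) with (- x).
    rewrite Rabs_Ropp. rewrite (Rabs_left (v - u)) by lra. apply Rle_trans with (u - v). apply Hgen; auto; lra. lra.
Qed.

Lemma FF_lim0 : exists LA, filterlim FF (at_right 0) (locally LA).
Proof.
  apply (filterlim_locally_cauchy (U := R_CompleteSpace)).
  intros eps.
  assert (Hd : 0 < Rmin 1 (eps / 2)) by (apply Rmin_glb_lt; [lra | destruct eps; simpl; lra]).
  exists (fun u => 0 < u < Rmin 1 (eps / 2)). split.
  - exists (mkposreal _ Hd). intros y Hy Hpos. change (Rabs (y - 0) < Rmin 1 (eps/2)) in Hy.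
    apply Rabs_def2 in Hy. lra.
  - intros u v Hu Hv. change (Rabs (FF v - FF u) < eps).
    rewrite FF_diff by lra.
    pose proof (Rmin_l 1 (eps/2)). pose proof (Rmin_r 1 (eps/2)).
    eapply Rle_lt_trans. apply int_abs_le01; lra.
    apply Rabs_def1; destruct eps; simpl in *; lra.
Qed.

Lemma int_tail u v : 0 < u <= v -> RInt f u v <= 2 * K * exp (- u / 2).
Proof.
  intros Huv.
  set (g := fun s => K * exp (- s / 2)).
  assert (Hg : is_RInt g u v (minus ((fun s => -2 * K * exp (- s / 2)) v) ((fun s => -2 * K * exp (- s / 2)) u))).
  { apply (is_RInt_derive (V := R_CompleteNormedModule) (fun s => -2 * K * exp (- s / 2)) g u v).
    - intros x _. unfold g. auto_derive. auto. unfold Rdiv. field.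
    - intros x _. unfold g. apply (ex_derive_continuous (K := R_AbsRing) (V := R_NormedModule)). auto_derive. auto. }
  apply Rle_trans with (RInt g u v).
  - apply RInt_le. lra. apply f_ex; lra. eexists; exact Hg.
    intros x Hx. apply f_le_g. lra.
  - rewrite (is_RInt_unique _ _ _ _ Hg). change (minus ?a ?b) with (a - b).
    pose proof (exp_pos (- v / 2)). unfold K. pose proof (exp_pos (k * (ln (2 * k) - 1))). nra.
Qed.

Lemma FF_liminf : exists LB, filterlim FF (Rbar_locally p_infty) (locally LB).
Proof.
  apply (filterlim_locally_cauchy (U := R_CompleteSpace)).
  intros eps. destruct eps as [eps Heps]. simpl.
  assert (HK : 0 < K) by apply exp_pos.
  set (M0 := Rmax 1 (- 2 * ln (eps / (2 * K)) + 1)).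
  exists (fun u => M0 < u). split.
  - exists M0. auto.
  - intros u v Hu Hv. change (Rabs (FF v - FF u) < eps).
    assert (HM1 : 1 <= M0) by apply Rmax_l.
    assert (HM2 : - 2 * ln (eps / (2 * K)) + 1 <= M0) by apply Rmax_r.
    assert (Hb : forall a, M0 < a -> 2 * K * exp (- a / 2) < eps).
    { intros a Ha. assert (- a / 2 < ln (eps / (2 * K))) by lra.
      apply exp_increasing in H. rewrite exp_ln in H by (apply Rdiv_lt_0_compat; lra).
      apply (Rmult_lt_compat_l (2 * K)) in H. 2: lra.
      replace (2 * K * (eps / (2 * K))) with eps in H by (field; lra). lra. }
    rewrite FF_diff by lra.
    destruct (Rle_dec u v).
    + pose proof (int_tail u v (conj (ltac:(lra) : 0 < u) r)).
      assert (0 <= RInt f u v) by (apply RInt_ge_0; auto; [apply f_ex; lra | intros; apply Rlt_le, f_pos]).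
      rewrite Rabs_right by lra. specialize (Hb u Hu). lra.
    + apply Rnot_le_lt in n. rewrite <- opp_RInt_swap by (apply f_ex; lra). change (opp ?x) with (- x). rewrite Rabs_Ropp.
      pose proof (int_tail v u (conj (ltac:(lra) : 0 < v) (ltac:(lra) : v <= u))).
      assert (0 <= RInt f v u) by (apply RInt_ge_0; [lra | apply f_ex; lra | intros; apply Rlt_le, f_pos]).
      rewrite Rabs_right by lra. specialize (Hb v Hv). lra.
Qed.

Lemma FF_derive x : 0 < x -> is_derive FF x (f x).
Proof.
  intros Hx. apply is_derive_RInt with (a := 1).
  - generalize (locally_gt x 0 Hx). apply filter_imp. intros y Hy. apply RInt_correct, f_ex; lra.
  - apply f_cont; auto.
Qed.

Lemma gamma_pos_aux : 0 < RInt_gen f (at_right 0) (Rbar_locally p_infty).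
Proof.
  destruct FF_lim0 as [LA HA]. destruct FF_liminf as [LB HB].
  assert (HI : is_RInt_gen (Derive FF) (at_right 0) (Rbar_locally p_infty) (LB - LA)).
  { apply is_RInt_gen_Derive; auto.
    - apply Filter_prod with (Q := fun a => 0 < a) (R := fun b => 0 < b).
      + exists (mkposreal 1 Rlt_0_1). intros; auto.
      + exists 0. auto.
      + intros a b Ha Hb x Hx. eexists. apply FF_derive.
        simpl in Hx. unfold Rmin in Hx. destruct (Rle_dec a b); lra.
    - apply Filter_prod with (Q := fun a => 0 < a) (R := fun b => 0 < b).
      + exists (mkposreal 1 Rlt_0_1). intros; auto.
      + exists 0. auto.
      + intros a b Ha Hb x Hx. simpl in Hx.
        assert (Hx0 : 0 < x) by (unfold Rmin in Hx; destruct (Rle_dec a b); lra).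
        apply continuous_ext_loc with f.
        * generalize (locally_gt x 0 Hx0). apply filter_imp. intros y Hy.
          symmetry. apply is_derive_unique, FF_derive; auto.
        * apply f_cont; auto. }
  apply is_RInt_gen_ext with (g := f) in HI.
  2:{ apply Filter_prod with (Q := fun a => 0 < a) (R := fun b => 0 < b).
      + exists (mkposreal 1 Rlt_0_1). intros; auto.
      + exists 0. auto.
      + intros a b Ha Hb x Hx. simpl in Hx.
        assert (Hx0 : 0 < x) by (unfold Rmin in Hx; destruct (Rle_dec a b); lra).
        apply is_derive_unique, FF_derive; auto. }
  rewrite (is_RInt_gen_unique _ _ HI).
  assert (HLA : Rbar_le LA 0).
  { apply (filterlim_le (F := at_right 0) FF (fun _ => 0)).
    - exists (mkposreal 1 Rlt_0_1). intros y Hy Hpos. change (Rabs (y - 0) < 1) in Hy.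
      apply Rabs_def2 in Hy. unfold FF.
      rewrite <- opp_RInt_swap by (apply f_ex; lra). change (opp ?x) with (- x).
      assert (0 <= RInt f y 1) by (apply RInt_ge_0; [lra | apply f_ex; lra | intros; apply Rlt_le, f_pos]).
      lra.
    - exact HA.
    - apply filterlim_const. }
  assert (HF2 : 0 < FF 2).
  { unfold FF. apply Rlt_le_trans with (RInt (fun _ => exp (-2)) 1 2).
    rewrite RInt_const. change (scal ?a ?b) with (a * b). pose proof (exp_pos (-2)). lra.
    apply RInt_le. lra. apply ex_RInt_const. apply f_ex; lra.
    intros x Hx. unfold f, Rpower.
    assert (0 <= ln x) by (rewrite <- ln_1; apply ln_le; lra).
    assert (1 <= exp (k * ln x)) by (rewrite <- exp_0; apply exp_le_mono; nra).
    assert (exp (- 2) <= exp (- x)) by (apply exp_le_mono; lra).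
    pose proof (exp_pos (-2)). nra. }
  assert (HLB : Rbar_le (FF 2) LB).
  { apply (filterlim_le (F := Rbar_locally p_infty) (fun _ => FF 2) FF).
    - exists 2. intros b Hb. assert (FF b - FF 2 = RInt f 2 b) by (apply FF_diff; lra).
      assert (0 <= RInt f 2 b) by (apply RInt_ge_0; [lra | apply f_ex; lra | intros; apply Rlt_le, f_pos]).
      lra.
    - apply filterlim_const.
    - exact HB. }
  simpl in HLA, HLB. lra.
Qed.
End Gam.

Lemma gamma_pos k : 0 < k -> 0 < RInt_gen (fun s => Rpower s k * exp (- s)) (at_right 0) (Rbar_locally p_infty).
Proof. intros hk. apply gamma_pos_aux; auto. Qed.

Lemma Sigma_pos n : (2 <= n)%nat -> 0 < Sigma n.
Proof.
  intros hn. unfold Sigma, Gamma.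
  assert (H2 : 2 <= INR n) by (replace 2 with (INR 2) by (simpl; ring); apply le_INR; auto).
  apply Rdiv_lt_0_compat.
  - unfold Rpower. pose proof (exp_pos ((INR n + 1) / 2 * ln PI)). lra.
  - apply gamma_pos. lra.
Qed.

Lemma CV_radius_incr_n (a : nat -> R) m : CV_radius (PS_incr_n a m) = CV_radius a.
Proof.
  induction m as [|m IH]. reflexivity.
  change (PS_incr_n a (S m)) with (PS_incr_1 (PS_incr_n a m)).
  rewrite CV_radius_incr_1. exact IH.
Qed.

Section Main.
Variable n : nat.
Hypothesis hn : (2 <= n)%nat.
Variable t : R.
Hypothesis Ht : -1 <= t < 1.

Let lam := lam_of n.
Lemma INR_n2 : 2 <= INR n.
Proof. replace 2 with (INR 2) by (simpl; ring). apply le_INR; auto. Qed.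
Lemma hlam : 0 < lam.
Proof. unfold lam, lam_of. pose proof INR_n2. lra. Qed.

Definition fc r := ((1 - r^2) / exp ((lam + 1) * ln (1 - 2*r*t + r^2)) - 1) / r.
Definition fo r := (Sigma n * poisson n r t - 1) / r.
Definition fh r := if Rle_dec r 0 then PSeries (ee lam t) r else fc r.

Lemma fo_fc r : fo r = fc r.
Proof.
  unfold fo, fc, poisson, Rpower. pose proof (Sigma_pos n hn).
  rewrite <- Rmult_assoc, Rinv_r, Rmult_1_l by lra.
  replace ((INR n + 1) / 2) with (lam + 1) by (unfold lam, lam_of; field).
  reflexivity.
Qed.

Lemma fc_cont x : 0 < x -> continuous fc x.
Proof.
  intros Hx. apply (ex_derive_continuous (K := R_AbsRing) (V := R_NormedModule)).
  pose proof (q_pos t Ht x ltac:(lra)).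
  unfold fc. auto_derive. repeat split.
  - replace (1 + - (2 * x * t) + x * (x * 1)) with (1 - 2 * x * t + x ^ 2) by ring. lra.
  - apply Rgt_not_eq, exp_pos.
  - apply Rgt_not_eq; lra.
Qed.

Lemma ee_cont x : Rabs x < 1 -> continuous (PSeries (ee lam t)) x.
Proof.
  intros Hx. apply (ex_derive_continuous (K := R_AbsRing) (V := R_NormedModule)).
  apply ex_derive_PSeries. eapply Rbar_lt_le_trans. 2: apply (rad_ee lam t hlam Ht). exact Hx.
Qed.

Lemma fh_pos y : 0 < y -> fh y = fc y.
Proof. intros H. unfold fh. destruct (Rle_dec y 0); [lra | auto]. Qed.

Lemma fh_small y : -1 < y < 1 -> fh y = PSeries (ee lam t) y.
Proof.
  intros H. unfold fh. destruct (Rle_dec y 0); auto.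
  unfold fc. rewrite (e_closed lam t hlam Ht y) by lra. reflexivity.
Qed.

Lemma fh_cont x : -1 < x -> continuous fh x.
Proof.
  intros Hx. destruct (Rlt_dec 0 x) as [H|H].
  - apply continuous_ext_loc with fc. 2: apply fc_cont; auto.
    generalize (locally_gt x 0 H). apply filter_imp. intros y Hy. symmetry. apply fh_pos; auto.
  - apply continuous_ext_loc with (PSeries (ee lam t)).
    2: apply ee_cont; apply Rabs_def1; lra.
    generalize (filter_and _ _ (locally_gt x (-1) Hx) (locally_lt x 1 ltac:(lra))).
    apply filter_imp. intros y Hy. symmetry. apply fh_small; lra.
Qed.

Lemma fh_ex b : -1 < b -> ex_RInt fh 0 b.
Proof.
  intros Hb. apply (ex_RInt_continuous (V := R_CompleteNormedModule)). intros z Hz. apply fh_cont.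
  unfold Rmin, Rmax in Hz. destruct (Rle_dec 0 b); lra.
Qed.

Definition Ah R0 := RInt fh 0 R0.

Lemma Ah_der x : -1 < x -> is_derive Ah x (fh x).
Proof.
  intros Hx. apply is_derive_RInt with (a := 0).
  - generalize (locally_gt x (-1) Hx). apply filter_imp. intros y Hy. apply RInt_correct, fh_ex; auto.
  - apply fh_cont; auto.
Qed.

Definition hh R0 := R0 ^ (n - 2) * Ah R0.

Lemma hh_cont x : -1 < x -> continuous hh x.
Proof.
  intros Hx. apply (ex_derive_continuous (K := R_AbsRing) (V := R_NormedModule)).
  unfold hh. auto_derive. eexists. apply Ah_der; auto.
Qed.

Lemma hh_ex b : -1 < b -> ex_RInt hh 0 b.
Proof.
  intros Hb. apply (ex_RInt_continuous (V := R_CompleteNormedModule)). intros z Hz. apply hh_cont.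
  unfold Rmin, Rmax in Hz. destruct (Rle_dec 0 b); lra.
Qed.

Definition Phi rho := - RInt hh 0 rho.

Lemma Phi_der : ex_derive Phi 1.
Proof.
  unfold Phi. auto_derive. split. apply hh_ex; lra. split; auto.
  generalize (locally_gt 1 (-1) ltac:(lra)). apply filter_imp. intros y Hy.
  apply continuity_pt_filterlim. apply hh_cont; auto.
Qed.

Definition dd k := ee lam t k / INR (S k) / INR (k + n).

Lemma A3 m : PS_Int (PS_incr_n (PS_Int (ee lam t)) (n - 2)) m = PS_incr_n dd n m.
Proof.
  rewrite (PS_incr_n_simplify dd). destruct m as [|j].
  - simpl PS_Int. destruct (Compare_dec.le_lt_dec n 0); [lia | reflexivity].
  - unfold PS_Int at 1. rewrite PS_incr_n_simplify.
    destruct (Compare_dec.le_lt_dec (n-2) j) as [h1|h1];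
    destruct (Compare_dec.le_lt_dec n (S j)) as [h2|h2].
    + remember (j - (n-2))%nat as i. destruct i as [|i]. lia.
      unfold PS_Int, dd. replace (S j - n)%nat with i by lia. replace (i + n)%nat with (S j) by lia.
      reflexivity.
    + replace (j - (n-2))%nat with O by lia. simpl. unfold Rdiv. apply Rmult_0_l.
    + lia.
    + simpl. unfold Rdiv. apply Rmult_0_l.
Qed.

Lemma Phi_series rho : 0 < rho < 1 ->
  Phi rho = rho ^ (n - 1) * Series (fun k => rho ^ (S k) * K_term n (S k) t).
Proof.
  intros Hr.
  pose proof (rad_ee lam t hlam Ht) as Hrad.
  assert (Hlt : forall x, Rabs x < 1 -> Rbar_lt (Rabs x) (CV_radius (ee lam t))).
  { intros x Hx. eapply Rbar_lt_le_trans. 2: exact Hrad. exact Hx. }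
  assert (A1 : forall R0, 0 < R0 < 1 -> Ah R0 = PSeries (PS_Int (ee lam t)) R0).
  { intros R0 HR. unfold Ah. rewrite <- RInt_PSeries. 2: apply Hlt; apply Rabs_def1; lra.
    apply RInt_ext. intros x Hx. rewrite Rmin_left, Rmax_right in Hx by lra. apply fh_small; lra. }
  assert (A2 : RInt hh 0 rho = RInt (PSeries (PS_incr_n (PS_Int (ee lam t)) (n - 2))) 0 rho).
  { apply RInt_ext. intros x Hx. rewrite Rmin_left, Rmax_right in Hx by lra.
    unfold hh. rewrite A1 by lra. rewrite PSeries_incr_n. reflexivity. }
  rewrite RInt_PSeries in A2.
  2:{ rewrite CV_radius_incr_n, CV_radius_Int. apply Hlt. apply Rabs_def1; lra. }
  rewrite (PSeries_ext _ _ _ A3), PSeries_incr_n in A2.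
  assert (A4 : Series (fun k => rho ^ (S k) * K_term n (S k) t) = - rho * PSeries dd rho).
  { unfold PSeries. rewrite <- Series_scal_l. apply Series_ext. intros k.
    unfold K_term, dd, ee, PS_decr_1, aa, cc. fold lam.
    rewrite plus_INR. rewrite !S_INR. pose proof (pos_INR k). pose proof INR_n2. pose proof hlam.
    simpl pow. field. repeat split; lra. }
  unfold Phi. rewrite A2, A4.
  replace n with (S (n - 1)) at 1 by lia. simpl pow. ring.
Qed.

Lemma filter_le_at_right x : filter_le (at_right x) (locally x).
Proof. intros P HP. unfold at_right, within. generalize HP. apply filter_imp. auto. Qed.
Lemma filter_le_at_left x : filter_le (at_left x) (locally x).
Proof. intros P HP. unfold at_left, within. generalize HP. apply filter_imp. auto. Qed.

Lemma main_t :
  filterlim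
    (fun eps => - RInt (fun R0 => R0 ^ (n - 2) *
                   RInt (fun r => (Sigma n * poisson n r t - 1) / r) 0 R0)
                 0 (1 - eps))
    (at_right 0) (locally (Kfun n t)).
Proof.
  assert (HPc : filterlim Phi (locally 1) (locally (Phi 1))).
  { apply (ex_derive_continuous (K := R_AbsRing) (V := R_NormedModule)). apply Phi_der. }
  assert (HS : filterlim (fun rho => Series (fun k => rho ^ S k * K_term n (S k) t)) (at_left 1) (locally (Phi 1))).
  { apply filterlim_ext_loc with (fun rho => Phi rho / rho ^ (n - 1)).
    - unfold at_left, within. generalize (locally_gt 1 0 ltac:(lra)). apply filter_imp.
      intros y Hy Hy1. rewrite Phi_series by lra. field. apply pow_nonzero. lra.
    - apply (filterlim_filter_le_1 (F := locally 1)). apply filter_le_at_left.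
      assert (Hc : continuous (fun rho => Phi rho / rho ^ (n - 1)) 1).
      { apply (ex_derive_continuous (K := R_AbsRing) (V := R_NormedModule)).
        auto_derive. split. apply Phi_der. split; auto. rewrite pow1. lra. }
      unfold continuous in Hc. rewrite pow1, Rdiv_1_r in Hc. exact Hc. }
  assert (HK : Kfun n t = Phi 1).
  { unfold Kfun.
    refine (filterlim_locally_unique (F := at_left 1) (fun rho => Series (fun k => rho ^ S k * K_term n (S k) t)) _ _ _ _).
    - apply (epsilon_spec (inhabits 0) (fun L => filterlim (fun rho => Series (fun k => rho ^ S k * K_term n (S k) t)) (at_left 1) (locally L))).
      exists (Phi 1). exact HS.
    - exact HS. }
  rewrite HK.
  apply filterlim_ext_loc with (fun eps => Phi (1 - eps)).
  - unfold at_right, within. generalize (locally_lt 0 1 ltac:(lra)). apply filter_imp.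
    intros y Hy Hy0. unfold Phi. f_equal. apply RInt_ext. intros R0 HR0.
    rewrite Rmin_left, Rmax_right in HR0 by lra.
    unfold hh, Ah. f_equal. apply RInt_ext. intros x Hx.
    rewrite Rmin_left, Rmax_right in Hx by lra.
    rewrite fh_pos by lra. rewrite <- fo_fc. reflexivity.
  - apply filterlim_comp with (G := locally 1). 2: exact HPc.
    apply (filterlim_filter_le_1 (F := locally 0)). apply filter_le_at_right.
    assert (Hc : continuous (fun e : R => 1 - e) 0).
    { apply (ex_derive_continuous (K := R_AbsRing) (V := R_NormedModule)). auto_derive. auto. }
    unfold continuous in Hc. replace (1 - 0) with 1 in Hc by ring. exact Hc.
Qed.
End Main.

Theorem mainTheorem2 (n : nat) (hn : (2 <= n)%nat) (theta : R)
  (htheta : 0 < theta <= PI) :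
  filterlim
    (fun eps => - RInt (fun R0 => R0 ^ (n - 2) *
                   RInt (fun r => (Sigma n * poisson n r (cos theta) - 1) / r) 0 R0)
                 0 (1 - eps))
    (at_right 0) (locally (Kfun n (cos theta))).
Proof.
  apply main_t. exact hn.
  split. apply COS_bound.
  rewrite <- cos_0. pose proof PI_RGT_0. apply cos_decreasing_1; lra.
Qed.
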